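(* Let $T,L$ be positive integers and $\epsilon\in(0,1)$. For $\rho=\{\rho_t^l\}\in[0,1]^{T\times L}$ let $F(\rho)=\sum_{t,l}\rho_t^l r_t^l b_t^l(\rho_t^l)$, $G(\rho)=1-\prod_{t=1}^T\prod_{l=1}^L\rho_t^l$, $H(\rho)=\sum_{t,l}(1-\rho_t^l)$. Let $\rho^\ast$ be an optimal solution of PA1: $\min F(\rho)$ s.t. $G(\rho)\le\epsilon$, $\rho\in[0,1]^{T\times L}$. Let $\tilde\lambda,\tilde\rho$ be optimal solutions of $\max_{\lambda\ge0}\min_{\rho\in[0,1]^{T\times L}}\{F(\rho)+\lambda[H(\rho)-\epsilon]\}$. Then $$0\le F(\tilde\rho)-F(\rho^\ast)\le\tilde\lambda\min\Big\{(TL-1)\epsilon,\ \frac{TL(TL-1)}{2}\epsilon^2\Big\}.$$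
   Context: For each $t\in\{1,\dots,T\}$, $l\in\{1,\dots,L\}$: $r_t^l$ is a positive integer and $b_t^l:[0,1]\to[0,b^l_{\max}]$ is strictly increasing and convex. $\rho_t^l$ is the probability of the event of successfully recruiting $r_t^l$ participants at time $t$, location $l$, and these events are independent. PA2 denotes $\min F(\rho)$ s.t. $H(\rho)\le\epsilon$, $\rho\in[0,1]^{T\times L}$; $F(\tilde\rho)$ is its optimal value. *)

(* Defs.v *)
From mathcomp Require Import all_boot all_order all_algebra.
Set Implicit Arguments. Unset Strict Implicit. Unset Printing Implicit Defensive.
Import Order.TTheory GRing.Theory Num.Theory.
Local Open Scope ring_scope.

Definition in_box (R : realFieldType) (T L : nat) (rho : 'I_T -> 'I_L -> R) :=
  forall t l, 0 <= rho t l <= 1.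

Definition Fobj (R : realFieldType) (T L : nat) (r : 'I_T -> 'I_L -> nat)
  (b : 'I_T -> 'I_L -> R -> R) (rho : 'I_T -> 'I_L -> R) : R :=
  \sum_(t < T) \sum_(l < L) rho t l * (r t l)%:R * b t l (rho t l).

Definition Gcon (R : realFieldType) (T L : nat) (rho : 'I_T -> 'I_L -> R) : R :=
  1 - \prod_(t < T) \prod_(l < L) rho t l.

Definition Hcon (R : realFieldType) (T L : nat) (rho : 'I_T -> 'I_L -> R) : R :=
  \sum_(t < T) \sum_(l < L) (1 - rho t l).

Definition Lag (R : realFieldType) (T L : nat) (r : 'I_T -> 'I_L -> nat)
  (b : 'I_T -> 'I_L -> R -> R) (eps lam : R) (rho : 'I_T -> 'I_L -> R) : R :=
  Fobj r b rho + lam * (Hcon rho - eps).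

Definition strictly_increasing01 (R : realFieldType) (f : R -> R) :=
  forall x y, 0 <= x -> x < y -> y <= 1 -> f x < f y.

Definition convex01 (R : realFieldType) (f : R -> R) :=
  forall x y a, 0 <= x <= 1 -> 0 <= y <= 1 -> 0 <= a <= 1 ->
    f (a * x + (1 - a) * y) <= a * f x + (1 - a) * f y.

(* Main.v *)
Require Import Defs.
From mathcomp Require Import all_boot all_order all_algebra.
From mathcomp Require Import ring lra.
Import Order.TTheory GRing.Theory Num.Theory.
Local Open Scope ring_scope.

Section Aux.
Variable R : realFieldType.
Variable I : eqType.

Lemma prod01 (s : seq I) (f : I -> R) : (forall i, 0 <= f i <= 1) ->
  0 <= \prod_(i <- s) f i <= 1.
Proof.
move=> hf; elim: s => [|a s IH]; first by rewrite big_nil ler01 lexx.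
rewrite big_cons; move/andP: IH => [h0 h1]; have /andP[a0 a1] := hf a.
apply/andP; split; first exact: mulr_ge0.
nra.
Qed.

Lemma prod_le_each (s : seq I) (f : I -> R) i : (forall i, 0 <= f i <= 1) ->
  i \in s -> \prod_(j <- s) f j <= f i.
Proof.
move=> hf; elim: s => [|a s IH] //; rewrite big_cons in_cons.
have /andP[h0 h1] := prod01 s f hf; have /andP[a0 a1] := hf a.
case/orP => [/eqP -> | his]; first by nra.
have := IH his; have /andP[i0 i1] := hf i; nra.
Qed.

Lemma union_bound (s : seq I) (f : I -> R) : (forall i, 0 <= f i <= 1) ->
  1 - \prod_(i <- s) f i <= \sum_(i <- s) (1 - f i).
Proof.
move=> hf; elim: s => [|a s IH]; first by rewrite big_nil big_nil subrr.
rewrite !big_cons; have /andP[h0 h1] := prod01 s f hf; have /andP[a0 a1] := hf a.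
nra.
Qed.

Lemma sum_bound (s : seq I) (f : I -> R) m : (forall i, 1 - f i <= m) ->
  \sum_(i <- s) (1 - f i) <= (size s)%:R * m.
Proof.
move=> hf; elim: s => [|a s IH]; first by rewrite big_nil mul0r.
rewrite big_cons /= -addn1 natrD; have := hf a; nra.
Qed.

Lemma bonf (s : seq I) (f : I -> R) m : (forall i, 0 <= f i <= 1) -> 0 <= m ->
  (forall i, 1 - f i <= m) ->
  2 * (\sum_(i <- s) (1 - f i) - (1 - \prod_(i <- s) f i)) <=
  (size s)%:R * ((size s)%:R - 1) * m ^+ 2.
Proof.
move=> hf m0 hm; elim: s => [|a s IH]; first by rewrite !big_nil subrr subr0 mulr0 !mul0r.
have hu := union_bound s f hf; have hs := sum_bound s f m hm.
rewrite !big_cons /= -addn1 natrD.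
have /andP[h0 h1] := prod01 s f hf; have /andP[a0 a1] := hf a; have ha := hm a.
set S := \sum_(i <- s) _ in IH hu hs *; set P := \prod_(i <- s) _ in IH hu hs h0 h1 *.
set n := (size s)%:R in IH hs *.
have k1 : (1 - f a) * (1 - P) <= m * (1 - P) by nra.
have k2 : m * (1 - P) <= m * (n * m) by apply: ler_wpM2l => //; lra.
rewrite expr2 in IH *; nra.
Qed.

End Aux.
Arguments prod01 {R I}.
Arguments prod_le_each {R I s f i}.
Arguments union_bound {R I}.
Arguments sum_bound {R I}.
Arguments bonf {R I s f m}.


Section Flat.
Variable R : realFieldType.
Variables T L : nat.

Lemma size_ie : size (index_enum ('I_T * 'I_L)%type) = (T * L)%N.
Proof. by rewrite -sum1_size sum1_card card_prod !card_ord. Qed.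

Lemma sum_flat (g : 'I_T -> 'I_L -> R) :
  \sum_(t < T) \sum_(l < L) g t l = \sum_(p <- index_enum ('I_T * 'I_L)%type) g p.1 p.2.
Proof. by rewrite pair_big. Qed.

Lemma prod_flat (g : 'I_T -> 'I_L -> R) :
  \prod_(t < T) \prod_(l < L) g t l = \prod_(p <- index_enum ('I_T * 'I_L)%type) g p.1 p.2.
Proof. by rewrite pair_big. Qed.

Lemma sum_change (g g' : 'I_T -> 'I_L -> R) t0 l0 :
  (forall t l, ~~ ((t == t0) && (l == l0)) -> g' t l = g t l) ->
  \sum_(t < T) \sum_(l < L) g' t l = \sum_(t < T) \sum_(l < L) g t l - g t0 l0 + g' t0 l0.
Proof.
move=> hg; rewrite !pair_big (bigD1 (t0, l0)) //= [in RHS](bigD1 (t0, l0)) //=.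
rewrite (eq_bigr (fun p => g p.1 p.2)); first by set X := \sum_(i <- _ | _) _; lra.
by case=> x y /=; rewrite xpair_eqE => h; apply: hg.
Qed.

Lemma term_le_sum (g : 'I_T -> 'I_L -> R) t0 l0 : (forall t l, 0 <= g t l) ->
  g t0 l0 <= \sum_(t < T) \sum_(l < L) g t l.
Proof.
move=> hg; rewrite pair_big (bigD1 (t0, l0)) //= lerDl.
by apply: sumr_ge0 => p _; apply: hg.
Qed.
End Flat.
Arguments size_ie {T L}.
Arguments sum_flat {R T L}.
Arguments prod_flat {R T L}.
Arguments sum_change {R T L}.
Arguments term_le_sum {R T L}.

Theorem theorem3 (R : realFieldType) (T L : nat) (hT : (0 < T)%N) (hL : (0 < L)%N)
  (eps : R) (heps : 0 < eps < 1)
  (r : 'I_T -> 'I_L -> nat) (hr : forall t l, (0 < r t l)%N)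
  (b : 'I_T -> 'I_L -> R -> R) (bmax : 'I_L -> R)
  (hb_range : forall t l x, 0 <= x <= 1 -> 0 <= b t l x <= bmax l)
  (hb_inc : forall t l, strictly_increasing01 (b t l))
  (hb_cvx : forall t l, convex01 (b t l))
  (* rho_star : optimal solution of PA1 *)
  (rho_star : 'I_T -> 'I_L -> R)
  (hstar_box : in_box rho_star) (hstar_G : Gcon rho_star <= eps)
  (hstar_opt : forall rho, in_box rho -> Gcon rho <= eps ->
                 Fobj r b rho_star <= Fobj r b rho)
  (* (lam_t, rho_t) : optimal solutions of max_{lam>=0} min_{rho in box} Lag *)
  (lam_t : R) (rho_t : 'I_T -> 'I_L -> R)
  (hlam : 0 <= lam_t) (ht_box : in_box rho_t)
  (ht_min : forall rho, in_box rho -> Lag r b eps lam_t rho_t <= Lag r b eps lam_t rho)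
  (ht_max : forall lam, 0 <= lam -> exists2 rho, in_box rho &
               Lag r b eps lam rho <= Lag r b eps lam_t rho_t)
  (* context: rho_t solves PA2 and F(rho_t) is its optimal value *)
  (ht_H : Hcon rho_t <= eps)
  (ht_opt2 : forall rho, in_box rho -> Hcon rho <= eps ->
               Fobj r b rho_t <= Fobj r b rho) :
  0 <= Fobj r b rho_t - Fobj r b rho_star /\
  Fobj r b rho_t - Fobj r b rho_star <=
    lam_t * Num.min (((T * L)%:R - 1) * eps)
                    (((T * L)%:R * ((T * L)%:R - 1) / 2) * eps ^+ 2).
Proof.
set X := ('I_T * 'I_L)%type.
have boxf : forall rho : 'I_T -> 'I_L -> R, in_box rho ->
    forall p : X, 0 <= rho p.1 p.2 <= 1 by move=> rho hb p; apply: hb.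
have HG : forall rho : 'I_T -> 'I_L -> R, in_box rho -> Gcon rho <= Hcon rho.
  move=> rho hb; rewrite /Gcon /Hcon (prod_flat rho) (sum_flat (fun t l => 1 - rho t l)).
  exact: (union_bound (index_enum X) (fun p : X => rho p.1 p.2) (boxf rho hb)).
have part1 : Fobj r b rho_star <= Fobj r b rho_t.
  by apply: hstar_opt => //; apply: le_trans (HG _ ht_box) ht_H.
have Heq : Hcon rho_t = eps.
  apply/eqP; rewrite eq_le ht_H /=; rewrite leNgt; apply/negP => hlt.
  pose t0 := Ordinal hT; pose l0 := Ordinal hL.
  have /andP[r00 r01] := ht_box t0 l0.
  set r0 := rho_t t0 l0 in r00 r01 *.
  have h1 : 1 - r0 <= Hcon rho_t.
    apply: (term_le_sum (fun t l => 1 - rho_t t l)) => t l.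
    by have /andP[_ ?] := ht_box t l; lra.
  have r0pos : 0 < r0 by move: heps => /andP[? ?]; lra.
  pose d : R := Num.min (eps - Hcon rho_t) r0.
  have d0 : 0 < d by rewrite lt_min subr_gt0 hlt r0pos.
  have d1 : d <= eps - Hcon rho_t by rewrite ge_min lexx.
  have d2 : d <= r0 by rewrite ge_min lexx orbT.
  clearbody d.
  pose rho' := fun t l => if (t == t0) && (l == l0) then r0 - d else rho_t t l.
  have box' : in_box rho'.
    move=> t l; rewrite /rho'; case: ifP => _; last exact: ht_box.
    apply/andP; split; first by rewrite subr_ge0.
    by rewrite lerBlDr (le_trans r01) // lerDl ltW.
  have H' : Hcon rho' = Hcon rho_t - (1 - r0) + (1 - (r0 - d)).
    rewrite /Hcon (sum_change (fun t l => 1 - rho_t t l) (fun t l => 1 - rho' t l) t0 l0).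
      by rewrite /rho' !eqxx.
    by move=> t l /negbTE h; rewrite /rho' h.
  have F' : Fobj r b rho' = Fobj r b rho_t - r0 * (r t0 l0)%:R * b t0 l0 r0
      + (r0 - d) * (r t0 l0)%:R * b t0 l0 (r0 - d).
    rewrite /Fobj (sum_change (fun t l => rho_t t l * (r t l)%:R * b t l (rho_t t l))
       (fun t l => rho' t l * (r t l)%:R * b t l (rho' t l)) t0 l0).
      by rewrite /rho' !eqxx.
    by move=> t l /negbTE h; rewrite /rho' h.
  have hbl : b t0 l0 (r0 - d) < b t0 l0 r0 by apply: hb_inc => //; lra.
  have /andP[hb0 _] : 0 <= b t0 l0 (r0 - d) <= bmax l0 by apply: hb_range; apply/andP; split; lra.
  have rpos : 0 < (r t0 l0)%:R :> R by rewrite ltr0n.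
  have k1 : (r0 - d) * b t0 l0 (r0 - d) < r0 * b t0 l0 r0 by nra.
  have k2 : (r0 - d) * (r t0 l0)%:R * b t0 l0 (r0 - d) < r0 * (r t0 l0)%:R * b t0 l0 r0.
    by rewrite -!mulrA ![(r t0 l0)%:R * _]mulrC !mulrA; nra.
  have := ht_opt2 rho' box'; rewrite H' F'; move=> hh.
  have : Fobj r b rho_t <= Fobj r b rho_t - r0 * (r t0 l0)%:R * b t0 l0 r0
      + (r0 - d) * (r t0 l0)%:R * b t0 l0 (r0 - d) by apply: hh; lra.
  lra.
have step3 : Fobj r b rho_t - Fobj r b rho_star <= lam_t * (Hcon rho_star - eps).
  have := ht_min rho_star hstar_box; rewrite /Lag Heq subrr mulr0 addr0; lra.
set P := \prod_(p <- index_enum X) rho_star p.1 p.2.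
have hP : 1 - P <= eps by move: hstar_G; rewrite /Gcon (prod_flat rho_star).
have hm : forall p : X, 1 - rho_star p.1 p.2 <= eps.
  move=> p; apply: le_trans hP; rewrite lerD2l lerN2.
  exact: (prod_le_each (boxf _ hstar_box) (mem_index_enum p)).
have e0 : 0 <= eps by move: heps => /andP[? ?]; lra.
have Hs := sum_bound (index_enum X) (fun p : X => rho_star p.1 p.2) eps hm.
have Hb := @bonf _ _ (index_enum X) _ eps (boxf _ hstar_box) e0 hm.
rewrite size_ie -/P in Hs Hb.
rewrite /Hcon (sum_flat (fun t l => 1 - rho_star t l)) in step3.
split; first by lra.
apply: le_trans step3 _; apply: ler_wpM2l => //.
rewrite le_min; apply/andP; split; first by lra.
set N := (T * L)%:R in Hb *.
set S := \sum_(p <- _) _ in Hb Hs *.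
have -> : N * (N - 1) / 2 * eps ^+ 2 = (N * (N - 1) * eps ^+ 2) / 2 by ring.
set K := N * (N - 1) * eps ^+ 2 in Hb *.
lra.
Qed.
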